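(* Let $\mathcal{M}\subset\mathbb{R}^n$ be a locally symmetric $C^2$ submanifold and let $\sigma_*$ be a characteristic permutation of $\mathcal{M}$. Then every set in the partition $P(\sigma_* )$ consists of consecutive integers of $\mathbb{N}_n$.
   Context: $\Sigma^n$ is the group of permutations of $\mathbb{N}_n=\{1,\dots,n\}$, acting on $\mathbb{R}^n$ by $(\sigma x)_i=x_{\sigma^{-1}(i)}$. $P(\sigma)$ is the partition of $\mathbb{N}_n$ into the orbits of $\sigma$. For $x\in\mathbb{R}^n$, $P(x)$ is the partition in which $i,j$ lie in the same set iff $x_i=x_j$; $\Delta(\sigma)=\{x:P(x)=P(\sigma)\}$. $\mathbb{R}^n_{\ge}=\{x:x_1\ge\cdots\ge x_n\}$; $B(x,\delta)$ is the open Euclidean ball. A set $S\subset\mathbb{R}^n$ is locally symmetric if $S\cap\mathbb{R}^n_{\ge}\ne\emptyset$ and for every $x\in S$ there is $\delta>0$ with $\sigma(S\cap B(x,\delta))=S\cap B(x,\delta)$ for all $y\in S\cap B(x,\delta)$ and all $\sigma$ with $\sigma y=y$. A locally symmetric $C^2$ submanifold is a connected $C^2$ submanifold of $\mathbb{R}^n$ without boundary which is a locally symmetric set. A characteristic permutation of $\mathcal{M}$ is a $\sigma_*\in\Sigma^n$ for which there exist $\bar x\in\mathcal{M}$ and $\delta>0$ with $\mathcal{M}\cap B(\bar x,\delta)\subset\Delta(\sigma_* )$. *)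

(* Defs.v *)
(* Points of R^n are row vectors 'rV[R]_n,
   indices N_n = {1..n} are represented by 'I_n = {0..n-1}. *)
From HB Require Import structures.
From mathcomp Require Import all_boot all_order all_algebra all_fingroup.
From mathcomp Require Import all_classical all_reals all_analysis.
Set Implicit Arguments. Unset Strict Implicit. Unset Printing Implicit Defensive.
Import Order.TTheory GRing.Theory Num.Theory.
Import numFieldNormedType.Exports.
Local Open Scope ring_scope.

Definition Pvec (R : realType) (n : nat) (x : 'rV[R]_n) : {set {set 'I_n}} :=
  [set [set j | x ord0 j == x ord0 i] | i : 'I_n].

Local Open Scope classical_set_scope.

Section Defs.
Variables (R : realType) (n : nat).
Notation V := 'rV[R]_n.

Definition pact (s : 'S_n) (x : V) : V := \row_i x ord0 (s^-1%g i).

Definition Pperm (s : 'S_n) : {set {set 'I_n}} := porbits s.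


Definition Delta (s : 'S_n) : set V := [set x | Pvec x = Pperm s].

Definition Rge_cone : set V :=
  [set x | forall i j : 'I_n, (i <= j)%N -> x ord0 j <= x ord0 i].

Definition eball (x : V) (d : R) : set V :=
  [set y | Num.sqrt (\sum_i (y ord0 i - x ord0 i) ^+ 2) < d].

Definition locally_symmetric (S : set V) : Prop :=
  S `&` Rge_cone !=set0 /\
  forall x, S x -> exists2 d : R, 0 < d &
    forall y, (S `&` eball x d) y ->
    forall s : 'S_n, pact s y = y ->
      pact s @` (S `&` eball x d) = S `&` eball x d.

End Defs.

Section Smooth.
Variables (R : realType) (n k : nat).
Definition C1_on (U : set 'rV[R]_n) (f : 'rV[R]_n -> 'rV[R]_k) : Prop :=
  forall v : 'rV[R]_n, forall x, U x ->
    derivable f x v /\ {for x, continuous (fun y => 'D_v f y)}.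
Definition C2_on (U : set 'rV[R]_n) (f : 'rV[R]_n -> 'rV[R]_k) : Prop :=
  C1_on U f /\ forall v : 'rV[R]_n, C1_on U (fun y => 'D_v f y).
End Smooth.

(* A connected C^2 embedded submanifold of R^n (without boundary) of some
   dimension d: locally the regular zero set of a C^2 map into R^(n-d). *)
Definition C2_submanifold (R : realType) (n : nat) (M : set 'rV[R]_n) : Prop :=
  exists d : nat, (d <= n)%N /\
  forall x, M x -> exists U : set 'rV[R]_n, exists F : 'rV[R]_n -> 'rV[R]_(n - d),
    [/\ open U, U x, C2_on U F,
        (forall w : 'rV[R]_(n - d), exists v : 'rV[R]_n, 'D_v F x = w) &
        M `&` U = [set y | U y /\ F y = 0]].

Definition locally_symmetric_C2_submanifold (R : realType) (n : nat)
  (M : set 'rV[R]_n) : Prop :=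
  [/\ C2_submanifold M, connected M & locally_symmetric M].

Definition characteristic_permutation (R : realType) (n : nat)
  (M : set 'rV[R]_n) (s : 'S_n) : Prop :=
  exists xb, M xb /\ exists2 d : R, 0 < d & M `&` eball xb d `<=` @Delta R n s.

(* Main.v *)
Require Import Defs.
From HB Require Import structures.
From mathcomp Require Import all_boot all_order all_algebra all_fingroup.
From mathcomp Require Import all_classical all_reals all_analysis.
From mathcomp Require Import zify ring lra.
From Stdlib Require Import Lia Classical.
Import Order.TTheory GRing.Theory Num.Theory.
Import numFieldNormedType.Exports.
Set Implicit Arguments. Unset Strict Implicit. Unset Printing Implicit Defensive.
Local Open Scope classical_set_scope.

Section A.
Local Open Scope ring_scope.
Variable R : realType.

Lemma coord_le n (x : 'rV[R]_n) i : `|x ord0 i| <= `|x|.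
Proof.
by rewrite [leRHS]/Num.Def.normr /= mx_normrE; apply/bigmax_geP; right => /=; exists (ord0, i).
Qed.

Lemma norm_le_coord n (x : 'rV[R]_n) c : 0 <= c ->
  (forall i, `|x ord0 i| <= c) -> `|x| <= c.
Proof.
move=> c0 H; rewrite [leLHS]/Num.Def.normr /= mx_normrE (bigmax_le _ c0) //= => -[i j] _.
by rewrite (ord1 i); apply: H.
Qed.

Lemma eball_norm n (x y : 'rV[R]_n) d : `|y - x| * n.+1%:R < d -> eball x d y.
Proof.
move=> H; rewrite /eball /=.
set c := `|y - x|.
have c0 : 0 <= c by exact: normr_ge0.
apply: (le_lt_trans _ H).
have -> : c * n.+1%:R = Num.sqrt ((c * n.+1%:R) ^+ 2).
  by rewrite sqrtr_sqr ger0_norm // mulr_ge0.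
rewrite ler_sqrt; last by rewrite sqr_ge0.
apply: (@le_trans _ _ (\sum_(i < n) c ^+ 2)).
  apply: ler_sum => i _.
  have := coord_le (y - x)%R i; rewrite !mxE => h.
  rewrite -[X in X <= _]ger0_norm ?sqr_ge0 // normrX.
  by rewrite lerXn2r // ?nnegrE.
rewrite sumr_const card_ord exprMn -[X in X <= _]mulr_natr; apply: ler_wpM2l; first exact: sqr_ge0.
by rewrite -natrX ler_nat; nia.
Qed.

Lemma mv1 (g dg : R -> R) (c K e : R) :
  (forall t, Num.min 0 c <= t <= Num.max 0 c ->
     is_derive t 1 g (dg t) /\ `|dg t - K| <= e) ->
  `|g c - g 0 - c * K| <= e * `|c|.
Proof.
move=> H.
have key : forall xi, Num.min 0 c <= xi <= Num.max 0 c ->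
    g c - g 0 = dg xi * c -> `|g c - g 0 - c * K| <= e * `|c|.
  move=> xi hxi ->; rewrite mulrC -mulrBr normrM mulrC; apply: ler_wpM2r => //.
  by case: (H xi hxi).
have gen : forall a b, a <= b -> Num.min 0 c = a -> Num.max 0 c = b ->
    exists2 xi, a <= xi <= b & g b - g a = dg xi * (b - a).
  move=> a b ab mi ma.
  have H1 : forall x, x \in `]a, b[%R -> is_derive x 1 g (dg x).
    move=> x; rewrite in_itv /= => /andP[/ltW h1 /ltW h2].
    by case: (H x); rewrite ?mi ?ma ?h1 ?h2.
  have H2 : {in `[a, b]%R, forall x, derivable g x 1}.
    move=> x; rewrite in_itv /= => /andP[h1 h2].
    by case: (H x); rewrite ?mi ?ma ?h1 ?h2 // => -[].
  have [xi hxi E] := MVT_segment ab H1 (derivable_within_continuous H2).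
  by exists xi => //; move: hxi; rewrite in_itv.
have [c0|c0] := leP 0 c.
- have mi : Num.min 0 c = 0 by exact/min_idPl.
  have ma : Num.max 0 c = c by exact/max_idPr.
  have [xi hxi E] := gen 0 c c0 mi ma.
  by apply: (key xi); [rewrite mi ma | rewrite E subr0].
- have mi : Num.min 0 c = c by exact/min_idPr/ltW.
  have ma : Num.max 0 c = 0 by exact/max_idPl/ltW.
  have [xi hxi E] := gen c 0 (ltW c0) mi ma.
  by apply: (key xi); [rewrite mi ma | rewrite -opprB E sub0r mulrN opprK].
Qed.

Lemma between_norm (u v w : R) : Num.min v w <= u <= Num.max v w ->
  `|u| <= Num.max `|v| `|w|.
Proof.
have [vw|wv] := leP v w.
- move=> /andP[h1 h2].
  have [u0|u0] := leP 0 u.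
  + rewrite ger0_norm // le_max; apply/orP; right.
    exact: le_trans h2 (ler_norm w).
  + rewrite ltr0_norm // le_max; apply/orP; left.
    rewrite -normrN; apply: le_trans (ler_norm _); by rewrite lerN2.
- move=> /andP[h1 h2].
  have [u0|u0] := leP 0 u.
  + rewrite ger0_norm // le_max; apply/orP; left.
    exact: le_trans h2 (ler_norm v).
  + rewrite ltr0_norm // le_max; apply/orP; right.
    rewrite -normrN; apply: le_trans (ler_norm _); by rewrite lerN2.
Qed.

Lemma between_shift (t c x : R) : Num.min 0 c <= t <= Num.max 0 c ->
  `|t + x| <= Num.max `|x| `|c + x|.
Proof.
move=> H; apply: between_norm; move: H.
by case: (leP 0 c) => c0 /andP[h1 h2]; case: (leP x (c + x)) => h3; apply/andP; split; lra.
Qed.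

Lemma geo_small (d : R) : 0 < d -> exists k : nat, (2^-1) ^+ k < d.
Proof.
move=> d0; exists (Num.Def.trunc d^-1).
set k := Num.Def.trunc d^-1.
rewrite exprVn -[X in _ < X]invrK ltf_pV2 ?posrE ?invr_gt0 ?exprn_gt0 //.
apply: (lt_le_trans (truncnS_gt _)).
rewrite -natrX ler_nat; exact: ltn_expl.
Qed.

Lemma mulmx_norm k l (u : 'rV[R]_k) (M : 'M[R]_(k, l)) :
  `|u *m M| <= (\sum_i \sum_j `|M i j|) * `|u|.
Proof.
apply: norm_le_coord; first by rewrite mulr_ge0 // sumr_ge0 // => i _; rewrite sumr_ge0.
move=> j; rewrite mxE; apply: le_trans (ler_norm_sum _ _ _) _.
rewrite mulrC mulr_sumr; apply: ler_sum => i _.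
rewrite normrM; apply: ler_pM => //; first by have := coord_le u i.
by rewrite (bigD1 j) //= lerDl sumr_ge0.
Qed.

Section E.
Variables (n m : nat) (U : set 'rV[R]_n) (F : 'rV[R]_n -> 'rV[R]_m)
  (q : 'rV[R]_n).
Hypotheses (oU : open U) (Uq : U q) (C1 : C1_on U F).

Definition ej (j : 'I_n) : 'rV[R]_n := delta_mx 0 j.
Definition Jac : 'M[R]_(n, m) := \matrix_(j, i) ('D_(ej j) F q) ord0 i.

Lemma line_derive (p v : 'rV[R]_n) (t : R) (i : 'I_m) :
  derivable F (t *: v + p) v ->
  is_derive t 1 (fun s => F (s *: v + p) ord0 i) (('D_v F (t *: v + p)) ord0 i).
Proof.
move=> dF.
set G := fun s : R => F (s *: v + p).
have eqq : (fun h : R => h^-1 *: ((G \o shift t) (h *: 1) - G t)) =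
           (fun h : R => h^-1 *: ((F \o shift (t *: v + p)) (h *: v) - F (t *: v + p))).
  apply/funext => h /=; rewrite /G /= /shift.
  by rewrite [h%:A]mulr1 scalerDl addrA.
have dG : derivable G t 1 by rewrite /derivable eqq.
have DG : 'D_1 G t = 'D_v F (t *: v + p) by rewrite /derive eqq.
have dGi := (derivable_mxP G t 1).1 dG ord0 i.
apply: DeriveDef => //.
by rewrite -DG (derive_mx dG) mxE.
Qed.

Lemma estE e : 0 < e -> exists2 r, 0 < r &
  (forall a, `|a - q| < r -> U a) /\
  (forall a b, `|a - q| < r -> `|b - q| < r ->
     `|F a - F b - (a - b) *m Jac| <= e * `|a - b|).
Proof.
move=> e0.
set e' := e / n.+1%:R.
have e'0 : 0 < e' by rewrite divr_gt0.
have Hn : \forall a \near q, U a /\ forall j, `|'D_(ej j) F q - 'D_(ej j) F a| < e'.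
  near=> a; split.
    by near: a; apply: open_nbhs_nbhs; split.
  near: a; apply: filter_forall => j.
  have [_ cont] := C1 (ej j) Uq.
  by move/cvgrPdist_lt: cont => /(_ e' e'0).
have [r r0 Hr] := (nbhs_ballP _ _).1 Hn.
have inball : forall z, `|z - q| < r -> U z /\ forall j, `|'D_(ej j) F q - 'D_(ej j) F z| < e'.
  by move=> z hz; apply: Hr; rewrite -ball_normE /ball_ /= distrC.
exists r => //; split; first by move=> a /inball [].
move=> a b ha hb.
have ab0 : 0 <= e * `|a - b| by rewrite mulr_ge0 // ltW.
apply: norm_le_coord => // i.
set p := fun k : nat => \row_(j < n) (if (j < k)%N then a ord0 j else b ord0 j).
have p0 : p 0%N = b by apply/rowP => j; rewrite mxE.
have pn : p n = a by apply/rowP => j; rewrite mxE ltn_ord.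
have pS : forall k : 'I_n, p k.+1 = (a ord0 k - b ord0 k) *: ej k + p k.
  move=> k; apply/rowP => j; rewrite !mxE /= ltnS.
  case: (ltngtP j k) => hjk.
  - have -> : (j == k) = false by apply/eqP => E; move: hjk; rewrite E ltnn.
    by rewrite mulr0 add0r.
  - have -> : (j == k) = false by apply/eqP => E; move: hjk; rewrite E ltnn.
    by rewrite mulr0 add0r.
  - by rewrite (val_inj hjk) eqxx mulr1 subrK.
set rho := Num.max `|a - q| `|b - q|.
have rhor : rho < r by rewrite /rho gt_max ha hb.
have pball : forall (k : 'I_n) t, Num.min 0 (a ord0 k - b ord0 k) <= t <= Num.max 0 (a ord0 k - b ord0 k) ->
    `|t *: ej k + p k - q| < r.
  move=> k t ht; apply: le_lt_trans rhor.
  apply: norm_le_coord; first by rewrite le_max normr_ge0.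
  move=> j; rewrite !mxE /=.
  have cq := coord_le (a - q) j; have cbq := coord_le (b - q) j.
  rewrite !mxE in cq cbq.
  have [hjk|hjk] := eqVneq j k.
  - subst j; rewrite mulr1 ltnn -addrA.
    apply: le_trans (between_shift _ ht) _.
    rewrite addrA subrK ge_max !le_max.
    by rewrite cq cbq !orbT.
  - rewrite mulr0 add0r.
    by case: ifP => _; rewrite le_max ?cq ?cbq ?orbT.
have term : forall k : 'I_n, `|F (p k.+1) ord0 i - F (p k) ord0 i - (a ord0 k - b ord0 k) * Jac k i|
    <= e' * `|a ord0 k - b ord0 k|.
  move=> k.
  have := @mv1 (fun s => F (s *: ej k + p k) ord0 i)
    (fun s => ('D_(ej k) F (s *: ej k + p k)) ord0 i) (a ord0 k - b ord0 k) (Jac k i) e'.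
  rewrite /= -pS scale0r add0r; apply.
  move=> t ht; have hz := pball k t ht; have [Uz Dz] := inball _ hz.
  split; first exact/line_derive/(C1 (ej k) Uz).1.
  have := coord_le ('D_(ej k) F (t *: ej k + p k) - 'D_(ej k) F q) i.
  rewrite /Jac !mxE => h; apply: (le_trans h); rewrite distrC; exact: ltW (Dz k).
have tel : \sum_(k < n) (F (p k.+1) ord0 i - F (p k) ord0 i) = F a ord0 i - F b ord0 i.
  by rewrite -(big_mkord xpredT (fun k => F (p k.+1) ord0 i - F (p k) ord0 i)) telescope_sumr // pn p0.
have -> : (F a - F b - (a - b) *m Jac) ord0 i = \sum_(k < n)
    (F (p k.+1) ord0 i - F (p k) ord0 i - (a ord0 k - b ord0 k) * Jac k i).
  rewrite sumrB tel !mxE; congr (_ - _).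
  by apply: eq_bigr => k _; rewrite !mxE.
apply: le_trans (ler_norm_sum _ _ _) _.
apply: le_trans (ler_sum _ (fun k _ => term k)) _.
apply: (@le_trans _ _ (\sum_(k < n) e' * `|a - b|)).
  apply: ler_sum => k _; apply: ler_wpM2l; first exact: ltW.
  by have := coord_le (a - b) k; rewrite !mxE.
rewrite sumr_const card_ord -mulrnAl; apply: ler_wpM2r => //.
rewrite /e' -mulr_natr mulrAC ler_pdivrMr ?ltr0Sn //.
by rewrite ler_wpM2l ?ler_nat // ltW.
Unshelve. all: by end_near.
Qed.

Lemma derive_Jac v : 'D_v F q = v *m Jac.
Proof.
apply: cvg_lim => //; apply/cvgrPdist_le => eps eps0.
set e := eps / (`|v| + 1).
have e0 : 0 < e by rewrite divr_gt0 // ltr_wpDl.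
have [r r0 [_ Er]] := estE e0.
have r'0 : 0 < r / (`|v| + 1) by rewrite divr_gt0 // ltr_wpDl.
near=> h.
have hr : `|h| < r / (`|v| + 1) by near: h; exact: dnbhs0_lt.
have h0 : h != 0 by near: h; exact: nbhs_dnbhs_neq.
have ha : `|(h *: v + q) - q| < r.
  rewrite addrK normrZ; apply: le_lt_trans (_ : `|h| * (`|v| + 1) < r).
    by rewrite ler_wpM2l // lerDl.
  by rewrite -ltr_pdivlMr // ltr_wpDl.
have hq : `|q - q| < r by rewrite subrr normr0.
have := Er _ _ ha hq; rewrite addrK /=.
rewrite /shift /= -scalemxAl => E.
have -> : v *m Jac - h^-1 *: (F (h *: v + q) - F q) =
    - (h^-1 *: (F (h *: v + q) - F q - h *: (v *m Jac))).
  by rewrite [in RHS](scalerBr h^-1 _ (h *: _)) scalerA mulVf // scale1r opprB.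
rewrite normrN normrZ normfV.
rewrite ler_pdivrMl ?normr_gt0 //.
apply: (le_trans E); rewrite normrZ mulrCA ler_wpM2l //.
rewrite /e mulrAC ler_pdivrMr ?ltr_wpDl // ler_wpM2l ?lerDl // ltW.
Unshelve. all: by end_near.
Qed.

Hypothesis surj : forall w : 'rV[R]_m, exists v, 'D_v F q = w.

Lemma rinv : exists B : 'M[R]_(m, n), B *m Jac = 1%:M.
Proof.
have /boolp.choice[f hf] : forall i : 'I_m, exists v : 'rV[R]_n, v *m Jac = delta_mx 0 i.
  by move=> i; have [v hv] := surj (delta_mx 0 i); exists v; rewrite -derive_Jac.
exists (\matrix_(i, j) f i ord0 j); apply/matrixP => i i'.
rewrite [LHS]mxE [RHS]mxE.
have := hf i; move/rowP/(_ i'); rewrite !mxE /= eq_sym => E; rewrite -E.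
by apply: eq_bigr => j _; rewrite mxE.
Qed.

Lemma newton : exists K : R, 0 < K /\ exists2 r : R, 0 < r &
  [/\ (forall a, `|a - q| < r -> U a),
      (forall a b, `|a - q| < r -> `|b - q| < r ->
         `|F a - F b - (a - b) *m Jac| <= (4 * K)^-1 * `|a - b|) &
      (forall p, `|p - q| + 2 * K * `|F p| < r -> exists x,
         [/\ F x = 0, `|x - q| < r & `|x - p| <= 2 * K * `|F p|])].
Proof.
have [B hB] := rinv.
set K := 1 + \sum_i \sum_j `|B i j|.
have S0 : 0 <= \sum_i \sum_j `|B i j| by rewrite sumr_ge0 // => i _; rewrite sumr_ge0.
have K0 : 0 < K by rewrite /K; lra.
have KB : forall w : 'rV[R]_m, `|w *m B| <= K * `|w|.
  move=> w; apply: (le_trans (mulmx_norm w B)); apply: ler_wpM2r => //; rewrite /K; lra.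
set KJ := \sum_i \sum_j `|Jac i j|.
have KJ0 : 0 <= KJ by rewrite sumr_ge0 // => i _; rewrite sumr_ge0.
have KJb : forall u : 'rV[R]_n, `|u *m Jac| <= KJ * `|u| by move=> u; exact: mulmx_norm.
have e0 : 0 < (4 * K)^-1 by rewrite invr_gt0 mulr_gt0.
have [r r0 [Ur Er]] := estE e0.
exists K; split => //; exists r => //; split => // p hp.
set fp := `|F p|.
have fp0 : 0 <= fp by exact: normr_ge0.
set N := fun y => y - F y *m B.
set x := fun k => iter k N p.
set h := fun k : nat => (2^-1 : R) ^+ k.
have xS : forall k, x k.+1 = x k - F (x k) *m B by [].
have hS : forall k, h k.+1 = h k / 2 by move=> k; rewrite /h exprSr.
have hpos : forall k, 0 < h k by move=> k; rewrite /h exprn_gt0 // invr_gt0.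
have hle1 : forall k, h k <= 1 by move=> k; rewrite /h exprn_ile1 // ?invr_ge0 // invf_le1 // ler1n.
have dq : forall y, `|y - p| <= 2 * K * fp -> `|y - q| < r.
  move=> y hy; have := ler_normD (y - p) (p - q); rewrite addrA subrK => h1.
  by apply: (le_lt_trans h1); apply: le_lt_trans hp; rewrite addrC lerD2l.
have inv : forall k, `|F (x k)| <= h k * fp /\ `|x k - p| <= 2 * K * (1 - h k) * fp.
  elim => [|k [IH1 IH2]].
    by rewrite /h /= expr0 mul1r subrr normr0 subrr !mulr0 mul0r; split.
  have hk0 := hpos k; have hk1 := hle1 k.
  have d1 : `|x k.+1 - x k| <= K * h k * fp.
    rewrite xS addrC addKr normrN; apply: le_trans (KB _) _.
    rewrite -mulrA ler_wpM2l //; exact: ltW.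
  have a1 : `|x k.+1 - p| <= 2 * K * (1 - h k.+1) * fp.
    have := ler_normD (x k.+1 - x k) (x k - p); rewrite addrA subrK => h1.
    rewrite hS; nra.
  split => //.
  have aux : forall t : R, 0 <= t -> 2 * K * (1 - t) * fp <= 2 * K * fp.
    by move=> t t0; rewrite mulrBr mulr1 mulrBl gerBl !mulr_ge0 // ?ltW.
  have b1 : `|x k - q| < r by apply: dq; apply: le_trans IH2 _; apply: aux; exact: ltW.
  have b2 : `|x k.+1 - q| < r by apply: dq; apply: le_trans a1 _; apply: aux; exact: ltW.
  have := Er _ _ b2 b1.
  have -> : (x k.+1 - x k) *m Jac = - F (x k).
    by rewrite xS addrC addKr mulNmx -mulmxA hB mulmx1.
  rewrite opprK subrK => h1; apply: (le_trans h1).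
  apply: le_trans (ler_wpM2l (ltW e0) d1) _.
  have K0' : K != 0 by rewrite gt_eqF.
  rewrite (_ : (4 * K)^-1 * (K * h k * fp) = h k * fp / 4); last by field.
  rewrite hS; nra.
have incr : forall k, `|x k.+1 - x k| <= K * h k * fp.
  move=> k; rewrite xS addrC addKr normrN; apply: le_trans (KB _) _.
  by rewrite -mulrA ler_wpM2l ?(inv k).1 // ltW.
have gen : forall k j, `|x (k + j)%N - x k| <= 2 * K * (h k - h (k + j)%N) * fp.
  move=> k; elim => [|j IH]; first by rewrite addn0 !subrr normr0 mulr0 mul0r.
  rewrite addnS.
  have := ler_normD (x (k + j).+1 - x (k + j)%N) (x (k + j)%N - x k); rewrite addrA subrK => h1.
  have := incr (k + j)%N => h2; rewrite hS; nra.
have gen2 : forall k l, (k <= l)%N -> `|x l - x k| <= 2 * K * h k * fp.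
  move=> k l kl; rewrite -(subnKC kl); apply: le_trans (gen _ _) _.
  by rewrite mulrBr mulrBl gerBl !mulr_ge0 // ?ltW ?mulr_gt0.
have small : forall eps, 0 < eps -> exists k, 2 * K * h k * fp < eps.
  move=> eps eps0.
  have c0 : 0 < 2 * K * fp + 1 by have := mulr_ge0 (ltW K0) fp0; lra.
  have [k hk] := geo_small (divr_gt0 eps0 c0).
  exists k; move: hk; rewrite -/(h k) ltr_pdivlMr // => hk.
  have := hpos k; nra.
have cx : cvgn x.
  apply: cauchy_cvg; apply: cauchy_exP => eps eps0.
  have [k hk] := small eps eps0.
  exists (x k); exists k => // l /= hl.
  rewrite -ball_normE /ball_ /= distrC; exact: le_lt_trans (gen2 _ _ hl) hk.
set L := limn x.
have Lk : forall k, `|L - x k| <= 2 * K * h k * fp.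
  move=> k; apply/ler_addgt0Pr => eps eps0.
  have [N0 _ HN] := (cvgrPdist_le _ _).1 cx eps eps0.
  have h1 := HN (maxn N0 k) (leq_maxl _ _).
  have h2 := gen2 k (maxn N0 k) (leq_maxr _ _).
  have := ler_normD (L - x (maxn N0 k)) (x (maxn N0 k) - x k); rewrite addrA subrK => h3.
  lra.
have Lp : `|L - p| <= 2 * K * fp.
  by have := Lk 0%N; rewrite /h expr0 mulr1.
have Lq := dq L Lp.
have aux : forall t : R, 0 <= t -> 2 * K * (1 - t) * fp <= 2 * K * fp.
  by move=> t t0; rewrite mulrBr mulr1 mulrBl gerBl !mulr_ge0 // ?ltW.
set C := 1 + ((4 * K)^-1 + KJ) * (2 * K).
have C0 : 0 < C by have := mulr_ge0 (addr_ge0 (ltW e0) KJ0) (ltW (mulr_gt0 (ltr0Sn _ 1) K0)); rewrite /C; lra.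
have bnd : forall k, `|F L| <= C * (h k * fp).
  move=> k.
  have xq : `|x k - q| < r by apply: dq; apply: le_trans (inv k).2 _; apply: aux; exact: ltW.
  have E1 := Er _ _ Lq xq.
  have E2 := KJb (L - x k).
  have E3 := (inv k).1.
  have E4 := Lk k.
  have -> : F L = F (x k) + (F L - F (x k) - (L - x k) *m Jac) + (L - x k) *m Jac.
    by rewrite -addrA subrK addrC subrK.
  apply: le_trans (ler_normD _ _) _; apply: le_trans (lerD (ler_normD _ _) (lexx _)) _.
  have hk0 := hpos k.
  set A := `|L - x k| in E1 E2 E4 *.
  rewrite /C; nra.
have FL : F L = 0.
  apply/eqP; rewrite -normr_eq0 eq_le normr_ge0 andbT.
  apply/ler_addgt0Pr => eps eps0; rewrite add0r.
  have c0 : 0 < C * fp + 1 by have := mulr_ge0 (ltW C0) fp0; lra.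
  have [k hk] := geo_small (divr_gt0 eps0 c0).
  move: hk; rewrite -/(h k) ltr_pdivlMr // => hk.
  apply: le_trans (bnd k) _; have := hpos k; nra.
by exists L; split.
Qed.

End E.
End A.

Section B.
Local Open Scope ring_scope.
Variables (R : realType) (n : nat) (M : set 'rV[R]_n).

Definition Wab (a b : 'I_n) : set 'rV[R]_n :=
  [set x | M x /\ exists2 d : R, 0 < d &
     forall y, M y -> `|y - x| < d -> y ord0 a = y ord0 b].

Lemma pact_tperm_fix (a b : 'I_n) (x : 'rV[R]_n) :
  x ord0 a = x ord0 b -> pact (tperm a b) x = x.
Proof.
move=> hab; apply/rowP => i; rewrite mxE tpermV.
have [->|hia] := eqVneq i a; first by rewrite tpermL.
have [->|hib] := eqVneq i b; first by rewrite tpermR.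
by rewrite tpermD // eq_sym.
Qed.

Lemma pact_tperm_a (a b : 'I_n) (x : 'rV[R]_n) :
  pact (tperm a b) x ord0 a = x ord0 b.
Proof. by rewrite mxE tpermV tpermL. Qed.

Lemma pact_tperm_b (a b : 'I_n) (x : 'rV[R]_n) :
  pact (tperm a b) x ord0 b = x ord0 a.
Proof. by rewrite mxE tpermV tpermR. Qed.

Lemma pact_tperm_other (a b i : 'I_n) (x : 'rV[R]_n) :
  i != a -> i != b -> pact (tperm a b) x ord0 i = x ord0 i.
Proof. by move=> ha hb; rewrite mxE tpermV tpermD // eq_sym. Qed.

Lemma eball_center (q : 'rV[R]_n) d : 0 < d -> eball q d q.
Proof.
move=> d0; rewrite /eball /=.
rewrite (eq_bigr (fun=> 0)); last by move=> i _; rewrite subrr expr0n.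
by rewrite big1 // sqrtr0.
Qed.


Lemma norm_ej_diff (a b : 'I_n) : `|ej R a - ej R b| <= 1.
Proof.
apply: norm_le_coord => // i; rewrite !mxE /=.
by case: (i == a); case: (i == b); rewrite /= ?subrr ?normr0 ?subr0 ?sub0r ?normrN ?normr1.
Qed.

Lemma key (a b : 'I_n) (ab : a != b) (q : 'rV[R]_n) :
  locally_symmetric_C2_submanifold M -> M q ->
  (forall rho, 0 < rho -> exists w, Wab a b w /\ `|w - q| < rho) -> Wab a b q.
Proof.
move=> [[dd [_ hC2]] _ [_ hls]] Mq approx.
have qab : q ord0 a = q ord0 b.
  apply/eqP; rewrite -subr_eq0 -normr_eq0 eq_le normr_ge0 andbT.
  apply/ler_addgt0Pr => e e0; rewrite add0r.
  have [w [[Mw [dw dw0 Hw]] hwq]] := approx (e / 2) (divr_gt0 e0 (ltr0Sn _ 1)).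
  have wab : w ord0 a = w ord0 b by apply: Hw => //; rewrite subrr normr0.
  have h1 := coord_le (q - w) a; have h2 := coord_le (q - w) b.
  rewrite !mxE in h1 h2.
  have -> : q ord0 a - q ord0 b = (q ord0 a - w ord0 a) - (q ord0 b - w ord0 b).
    by rewrite wab; ring.
  apply: le_trans (ler_normB _ _) _.
  rewrite distrC in hwq; lra.
have [U [F [oU Uq [C1 _] surj MU]]] := hC2 q Mq.
have [ds ds0 Hds] := hls q Mq.
have Sym := Hds q (conj Mq (eball_center q ds0)) (tperm a b) (pact_tperm_fix qab).
have [K [K0 [r r0 [Ur Er Newt]]]] := newton oU Uq C1 surj.
have zeroF : forall y, M y -> U y -> F y = 0.
  by move=> y My Uy; have : (M `&` U) y by []; rewrite MU => -[].
have inM : forall y, U y -> F y = 0 -> M y.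
  by move=> y Uy Fy; have : [set y | U y /\ F y = 0] y by []; rewrite -MU => -[].
set v := ej R a - ej R b.
have va : v ord0 a = 1 by rewrite !mxE eqxx (negbTE ab) subr0.
have ba : (b == a) = false by rewrite eq_sym (negbTE ab).
have vb : v ord0 b = -1 by rewrite !mxE ba eqxx sub0r.
have nv := norm_ej_diff a b.
have muA : v *m Jac F q != 0.
  apply/negP => /eqP vJ0.
  have r4 : 0 < r / 4 by rewrite divr_gt0.
  have [w [[Mw [dw dw0 Hw]] hwq]] := approx (r / 4) r4.
  have wab : w ord0 a = w ord0 b by apply: Hw => //; rewrite subrr normr0.
  set s := Num.min (r / 4) (dw / 2).
  have s0 : 0 < s by rewrite lt_min r4 divr_gt0.
  have s1 : s <= r / 4 by rewrite ge_min lexx.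
  have s2 : s <= dw / 2 by rewrite ge_min lexx orbT.
  set p := w + s *: v.
  have pwE : p - w = s *: v by rewrite /p addrAC subrr add0r.
  have pw : `|p - w| <= s.
    by rewrite pwE normrZ gtr0_norm //; apply: ler_piMr => //; exact: ltW.
  have Uw : `|w - q| < r by apply: lt_le_trans hwq _; rewrite ler_pdivrMr //; lra.
  have pq : `|p - q| <= r / 4 + s.
    have := ler_normD (p - w) (w - q); rewrite addrA subrK => h; lra.
  have pr : `|p - q| < r by lra.
  have Fw := zeroF w Mw (Ur w Uw).
  have Fp : `|F p| <= (4 * K)^-1 * s.
    have := Er p w pr Uw; rewrite Fw subr0.
    have -> : (p - w) *m Jac F q = 0 by rewrite pwE -scalemxAl vJ0 scaler0.
    rewrite subr0 => h; apply: (le_trans h); apply: ler_wpM2l => //.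
    by rewrite invr_ge0 mulr_ge0 // ltW.
  have h2K : 2 * K * `|F p| <= s / 2.
    have K0' : K != 0 by rewrite gt_eqF.
    have -> : s / 2 = 2 * K * ((4 * K)^-1 * s) by field.
    by apply: ler_wpM2l => //; rewrite mulr_ge0 // ltW.
  have hN : `|p - q| + 2 * K * `|F p| < r by lra.
  have [xs [Fx xq xp]] := Newt p hN.
  have Mx := inM xs (Ur _ xq) Fx.
  have xp2 : `|xs - p| <= s / 2 by apply: le_trans xp h2K.
  have xw : `|xs - w| < dw.
    have := ler_normD (xs - p) (p - w); rewrite addrA subrK => h; lra.
  have xab := Hw xs Mx xw.
  have pa : p ord0 a = w ord0 a + s * v ord0 a by rewrite /p mxE [(s *: v) _ _]mxE.
  have pb : p ord0 b = w ord0 b + s * v ord0 b by rewrite /p mxE [(s *: v) _ _]mxE.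
  rewrite va mulr1 in pa; rewrite vb mulrN1 in pb.
  have h1 := coord_le (xs - p) a; have h2 := coord_le (xs - p) b.
  rewrite [(xs - p) _ _]mxE [(- p) _ _]mxE pa in h1; rewrite [(xs - p) _ _]mxE [(- p) _ _]mxE pb in h2.
  have h1' := le_trans h1 xp2; have h2' := le_trans h2 xp2.
  move: h1' h2'; rewrite !ler_norml => /andP[h3 h4] /andP[h5 h6].
  lra.
set mu := `|v *m Jac F q|.
have mu0 : 0 < mu by rewrite normr_gt0.
have [r2 r20 [U2 E2]] := estE oU Uq C1 (divr_gt0 mu0 (ltr0Sn _ 1)).
have n0 : 0 < n.+1%:R :> R by rewrite ltr0Sn.
split => //; exists (Num.min r2 (ds / n.+1%:R)).
  by rewrite lt_min r20 divr_gt0.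
move=> y My; rewrite lt_min => /andP[hy1 hy2].
have Ay : (M `&` eball q ds) y.
  by split => //; apply: eball_norm; rewrite -ltr_pdivlMr.
set y' := pact (tperm a b) y.
have : (pact (tperm a b) @` (M `&` eball q ds)) y' by exists y.
rewrite Sym => -[My' _].
have y'q : `|y' - q| <= `|y - q|.
  apply: norm_le_coord => // i.
  have -> : (y' - q) ord0 i = (y - q) ord0 ((tperm a b)^-1 i)%g.
    rewrite !mxE; congr (_ - _).
    by rewrite -{1}(pact_tperm_fix qab) mxE.
  exact: coord_le.
have hy1' : `|y' - q| < r2 by apply: le_lt_trans y'q hy1.
have Fy := zeroF y My (U2 y hy1).
have Fy' := zeroF y' My' (U2 y' hy1').
have := E2 y y' hy1 hy1'; rewrite Fy Fy' subrr sub0r normrN.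
set c := y ord0 a - y ord0 b.
have yy' : y - y' = c *: v.
  apply/rowP => i; rewrite [LHS]mxE [(- y') _ _]mxE [RHS]mxE.
  have [->|hia] := eqVneq i a; first by rewrite pact_tperm_a va mulr1.
  have [->|hib] := eqVneq i b.
    by rewrite pact_tperm_b vb mulrN1 /c opprB.
  rewrite pact_tperm_other // subrr.
  by rewrite !mxE (negbTE hia) (negbTE hib) subrr mulr0.
rewrite yy' -scalemxAl !normrZ -/mu => h.
have hc : `|c| * mu <= mu / 2 * `|c|.
  apply: le_trans h _; apply: ler_wpM2l; first by rewrite divr_ge0 // ltW.
  exact: ler_piMr.
have c0 : `|c| = 0.
  have := normr_ge0 c; nra.
by apply/eqP; rewrite -subr_eq0 -normr_eq0 -/c c0.
Qed.


Lemma Wall (a b : 'I_n) (ab : a != b) :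
  locally_symmetric_C2_submanifold M -> Wab a b !=set0 ->
  forall x, M x -> Wab a b x.
Proof.
move=> hM ne x Mx.
have [_ conn _] := hM.
set C := [set z | exists2 d : R, 0 < d &
     forall y, M y -> `|y - z| < d -> y ord0 a = y ord0 b].
have WC : Wab a b = M `&` C by apply/seteqP; split => z [].
have oC : open C.
  rewrite openE => z [d d0 H].
  apply/nbhs_ballP; exists (d / 2); first by rewrite /= divr_gt0.
  move=> z' hz'; exists (d / 2); first by rewrite divr_gt0.
  move=> y My hy; apply: H => //.
  rewrite -ball_normE /= in hz'.
  have := ler_normD (y - z') (z' - z); rewrite addrA subrK => h.
  rewrite distrC in hz'; lra.
have cW : Wab a b = M `&` closure (Wab a b).
  apply/seteqP; split => z.
    by move=> hz; split; [exact: hz.1 | exact: subset_closure].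
  move=> [Mz cz]; apply: key => // rho rho0.
  have [w [Ww bw]] := cz _ (nbhsx_ballx z rho rho0).
  by exists w; split => //; rewrite -ball_normE /= distrC in bw.
have E := conn (Wab a b) ne (ex_intro2 _ _ C oC WC)
  (ex_intro2 _ _ (closure _) (@closed_closure _ _) cW).
by rewrite E.
Qed.

End B.

Theorem theorem3p28 (R : realType) (n : nat) (M : set 'rV[R]_n) (s : 'S_n) :
  locally_symmetric_C2_submanifold M ->
  characteristic_permutation M s ->
  forall O, O \in Pperm s ->
  forall i j k : 'I_n, i \in O -> j \in O -> (i <= k <= j)%N -> k \in O.
Proof.
move=> hM [xb [Mxb [dc dc0 Hc]]] O HO i j k iO jO /andP[ik kj].
have n0 : (0 < n.+1%:R :> R)%R by rewrite ltr0Sn.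
have blk : forall y : 'rV[R]_n, Pvec y = Pperm s -> forall l, l \in O -> y ord0 l = y ord0 i.
  move=> y Py l lO; move: HO; rewrite -Py => /imsetP[i0 _ OE].
  rewrite OE !inE in lO iO.
  by rewrite (eqP lO) (eqP iO).
have PxbE : Pvec xb = Pperm s := Hc xb (conj Mxb (eball_center xb dc0)).
apply: NNPP => kO.
have xbk : xb ord0 k != xb ord0 i.
  apply/negP => /eqP E; apply: kO.
  move: HO; rewrite -PxbE => /imsetP[i0 _ OE].
  rewrite OE !inE in iO *; by rewrite E.
have ki : k != i by apply/negP => /eqP E; apply: kO; rewrite E.
have kj' : k != j by apply/negP => /eqP E; apply: kO; rewrite E.
have ij : i != j.
  apply/negP => /eqP E; move/negP: ki; apply; apply/eqP/val_inj/eqP.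
  by rewrite /= eqn_leq ik andbT E.
have ik' : i != k by rewrite eq_sym.
have W1 : Wab M i j !=set0.
  exists xb; split => //; exists (dc / n.+1%:R)%R; first by rewrite divr_gt0.
  move=> y My hy.
  have Py : Pvec y = Pperm s.
    apply: Hc; split => //; apply: eball_norm; by rewrite -ltr_pdivlMr.
  by rewrite (blk y Py j jO).
have F1 : forall y, M y -> y ord0 i = y ord0 j.
  move=> y My; have [_ [d d0 H]] := Wall ij hM W1 My.
  by apply: H => //; rewrite subrr normr0.
have F2 : ~ (Wab M i k !=set0).
  move=> W2; have [_ [d d0 H]] := Wall ik' hM W2 Mxb.
  by move/eqP: xbk; apply; rewrite (H xb Mxb) // subrr normr0.
have [_ _ [[z [Mz Rz]] hls]] := hM.
have zij := F1 z Mz.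
have zkj : z ord0 k = z ord0 j.
  have h1 := Rz i k ik; have h2 := Rz k j kj.
  by apply/eqP; rewrite eq_le h2 andbT -zij.
have [dz dz0 Hz] := hls z Mz.
have Sym := Hz z (conj Mz (eball_center z dz0)) (tperm k j) (pact_tperm_fix zkj).
have [y [My hy yik]] : exists y, [/\ M y, (`|y - z| < dz / n.+1%:R)%R & y ord0 i != y ord0 k].
  apply: NNPP => Hno; apply: F2; exists z; split => //.
  exists (dz / n.+1%:R)%R; first by rewrite divr_gt0.
  move=> y My hy; apply: NNPP => nyik; apply: Hno; exists y; split => //; exact/eqP.
have Ay : (M `&` eball z dz) y.
  by split => //; apply: eball_norm; rewrite -ltr_pdivlMr.
have : (pact (tperm k j) @` (M `&` eball z dz)) (pact (tperm k j) y) by exists y.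
rewrite Sym => -[My' _].
have := F1 _ My'.
rewrite pact_tperm_b pact_tperm_other //.
by move/eqP: yik.
Qed.
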